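(* Let $j\in\mathbb Z$, and let $\lambda,\mu$ be partitions such that $\lambda$ has an addable node $\mathfrak l$ in column $j$ and $\mu$ has an addable node in column $j$; set $\lambda^+=\lambda\cup\{\mathfrak l\}$. Then $\mathrm e_{\lambda^+\mu}=\mathrm e_{\lambda\mu}$.
   Context: Partitions are identified with Young diagrams $\{(a,b)\in\mathbb N^2:b\le\lambda_a\}$; nodes are elements of $\mathbb N^2$; $(a,b)$ has height $a+b$ and lies in column $b-a$ (smaller column = further left). An addable node of $\lambda$ is a node not in $\lambda$ whose addition gives a partition. $\mathtt{NE}(\mathfrak n)=\mathfrak n+(0,1)$, $\mathtt{SW}(\mathfrak n)=\mathfrak n-(0,1)$, $\mathtt{SE}(\mathfrak n)=\mathfrak n-(1,0)$. A tile is a finite nonempty set of nodes orderable $\mathfrak n_1,\dots,\mathfrak n_r$ with $\mathfrak n_{i+1}\in\{\mathtt{NE}(\mathfrak n_i),\mathtt{SE}(\mathfrak n_i)\}$; start = leftmost node, end = rightmost node; Dyck tile if start and end both attain the maximal height of its nodes. A Dyck tiling of $\lambda\setminus\mu$ is a partition of it into Dyck tiles. It is cover-expansive if whenever $\mathfrak a,\mathtt{SE}(\mathfrak a)\in\lambda\setminus\mu$, the tile of $\mathtt{SE}(\mathfrak a)$ starts weakly left of the start of the tile of $\mathfrak a$, and whenever $\mathfrak a,\mathtt{SW}(\mathfrak a)\in\lambda\setminus\mu$, the tile of $\mathtt{SW}(\mathfrak a)$ ends weakly right of the end of the tile of $\mathfrak a$. $\mathrm e_{\lambda\mu}$ is the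 number of cover-expansive Dyck tilings of $\lambda\setminus\mu$ if $\lambda\supseteq\mu$, and $0$ otherwise. *)

(* Defs.v *)
From mathcomp Require Import all_boot all_order all_algebra.
Set Implicit Arguments. Unset Strict Implicit. Unset Printing Implicit Defensive.
Import Order.TTheory GRing.Theory Num.Theory.

(* Nodes are elements of N^2 with N = {1,2,...}; represented as nat*nat,
   only pairs with both coordinates >= 1 ever occur in a diagram. *)
Definition node := (nat * nat)%type.
Definition height (n : node) : nat := n.1 + n.2.
Definition column (n : node) : int := (n.2%:Z - n.1%:Z)%R.
Definition NE (n : node) : node := (n.1, n.2.+1).
Definition NW (n : node) : node := (n.1.+1, n.2).

Definition is_partition (l : seq nat) : bool :=
  sorted geq l && all (fun x => 0 < x) l.
Definition in_diagram (l : seq nat) (n : node) : bool :=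
  [&& 0 < n.1, 0 < n.2 & n.2 <= nth 0 l n.1.-1].

Definition addable (l : seq nat) (n : node) : Prop :=
  ~~ in_diagram l n /\
  exists l', is_partition l' /\
             forall m, in_diagram l' m = in_diagram l m || (m == n).

Definition diag_nodes (l : seq nat) : seq node :=
  [seq (a, b) | a <- iota 1 (size l), b <- iota 1 (nth 0 l a.-1)].
Definition contains (lam mu : seq nat) : bool :=
  all (in_diagram lam) (diag_nodes mu).
Definition skew_nodes (lam mu : seq nat) : seq node :=
  [seq n <- diag_nodes lam | ~~ in_diagram mu n].

Section Tilings.
Variables lam mu : seq nat.
Notation N := (seq_sub (skew_nodes lam mu)).

Definition stepN (x y : N) : bool :=
  (val y == NE (val x)) || (NW (val y) == val x).

Definition is_tile (T : {set N}) : bool :=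
  (T != set0) &&
  [exists s : #|T|.-tuple N, (T == [set x in s]) && sorted stepN s].

Definition starts_at (T : {set N}) (x : N) : bool :=
  (x \in T) && [forall y in T, (column (val x) <= column (val y))%R].
Definition ends_at (T : {set N}) (x : N) : bool :=
  (x \in T) && [forall y in T, (column (val y) <= column (val x))%R].

Definition is_dyck_tile (T : {set N}) : bool :=
  is_tile T &&
  [exists x, exists y,
     [&& starts_at T x, ends_at T y &
         [forall z in T, (height (val z) <= height (val x))
                         && (height (val z) <= height (val y))]]].

Definition is_dyck_tiling (P : {set {set N}}) : bool :=
  partition P [set: N] && [forall T in P, is_dyck_tile T].

Definition cover_expansive (P : {set {set N}}) : bool :=
  [forall x, forall y, forall Tx in P, forall Ty in P,
     ((x \in Tx) && (y \in Ty)) ==>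
     (* y = SE(x): tile of y starts weakly left of start of tile of x *)
     (((NW (val y) == val x) ==>
        [forall sx, forall sy, (starts_at Tx sx && starts_at Ty sy) ==>
            (column (val sy) <= column (val sx))%R]) &&
     (* y = SW(x): tile of y ends weakly right of end of tile of x *)
      ((NE (val y) == val x) ==>
        [forall ex, forall ey, (ends_at Tx ex && ends_at Ty ey) ==>
            (column (val ex) <= column (val ey))%R]))].

End Tilings.

Definition e_coef (lam mu : seq nat) : nat :=
  if contains lam mu then
    #|[set P : {set {set seq_sub (skew_nodes lam mu)}} |
        is_dyck_tiling P && cover_expansive P]|
  else 0.

(* Main.v *)
Require Import Defs.
From mathcomp Require Import all_boot all_order all_algebra zify.
Import Order.TTheory GRing.Theory Num.Theory.
Set Implicit Arguments. Unset Strict Implicit. Unset Printing Implicit Defensive.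

Definition SW (n : node) : node := (n.1, n.2.-1).
Definition SE (n : node) : node := (n.1.-1, n.2).

Lemma colNE (x : node) : column (NE x) = (column x + 1)%R.
Proof. case: x => a b; rewrite /column /NE /=; lia. Qed.
Lemma colNW (x : node) : column (NW x) = (column x - 1)%R.
Proof. case: x => a b; rewrite /column /NW /=; lia. Qed.

Definition nd (m : node) (i : nat) : node := (m.1 + i, m.2 + i).
Lemma nd_neqS m i : nd m i.+1 <> nd m i.
Proof. by rewrite /nd; case; lia. Qed.
Lemma col_nd m i : column (nd m i) = column m.
Proof. by case: m => a b; rewrite /column /nd /=; lia. Qed.
Lemma SW_nd m i : SW (nd m i.+1) = NW (nd m i).
Proof. by case: m => a b; rewrite /nd /SW /NW /=; congr pair; lia. Qed.
Lemma SE_nd m i : SE (nd m i.+1) = NE (nd m i).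
Proof. by case: m => a b; rewrite /nd /SE /NE /=; congr pair; lia. Qed.

Section Generic.
Variables L M : seq nat.
Notation N := (seq_sub (skew_nodes L M)).
Implicit Types (x y : N) (T : {set N}) (P : {set {set N}}).

Lemma stepN_col x y : @stepN L M x y -> column (val y) = (column (val x) + 1)%R.
Proof.
rewrite /stepN => /orP [/eqP -> | /eqP <-]; first exact: colNE.
by rewrite colNW; lia.
Qed.

Lemma sorted_col (s : seq N) x0 i : sorted (@stepN L M) s -> i < size s ->
  column (val (nth x0 s i)) = (column (val (nth x0 s 0)) + i%:Z)%R.
Proof.
case: s => [|a s] //= Hp; elim: i => [|i IH] Hi; first by rewrite addr0.
have Hi' : i < size s by [].
move/pathP: (Hp) => /(_ x0 i Hi') /stepN_col /= ->.
rewrite IH; last by apply: ltnW.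
lia.
Qed.

Lemma is_tileE T : @is_tile L M T <->
  T != set0 /\ exists s : seq N,
    [/\ size s = #|T|, T = [set x in s] & sorted (@stepN L M) s].
Proof.
split.
  case/andP => nz /existsP [s /andP [/eqP E srt]]; split => //.
  by exists (val s); rewrite size_tuple.
case => nz [s [Hs E srt]]; apply/andP; split => //.
have Hs' : size s == #|T| by apply/eqP.
by apply/existsP; exists (Tuple Hs'); rewrite /= -E eqxx.
Qed.

Lemma tile_col_inj T x y : @is_tile L M T -> x \in T -> y \in T ->
  column (val x) = column (val y) -> x = y.
Proof.
case/is_tileE => _ [s [_ E srt]]; rewrite E !inE => xs ys Hc.
have := sorted_col x srt (etrans (index_mem x s) xs); rewrite nth_index // => Hx.
have := sorted_col x srt (etrans (index_mem y s) ys); rewrite nth_index // => Hy.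
have : index x s = index y s by move: Hc; rewrite Hx Hy; lia.
by move=> Ei; rewrite -(nth_index x xs) Ei nth_index.
Qed.

Lemma sorted_step (s : seq N) x0 i : sorted (@stepN L M) s -> i.+1 < size s ->
  @stepN L M (nth x0 s i) (nth x0 s i.+1).
Proof. by case: s => [|a s] //= /pathP Hp Hi; apply: Hp. Qed.

Lemma tile_pred T x y : @is_tile L M T -> x \in T -> y \in T ->
  (column (val y) < column (val x))%R -> exists2 w, w \in T & @stepN L M w x.
Proof.
case/is_tileE => _ [s [_ E srt]]; rewrite E !inE => xs ys Hc.
have := sorted_col x srt (etrans (index_mem x s) xs); rewrite nth_index // => Hx.
have := sorted_col x srt (etrans (index_mem y s) ys); rewrite nth_index // => Hy.
have : 0 < index x s by move: Hc; rewrite Hx Hy; lia.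
case Ei: (index x s) => [|i] // _.
have Hi : i.+1 < size s by rewrite -Ei index_mem.
exists (nth x s i); first by rewrite inE mem_nth // ltnW.
by have := sorted_step x srt Hi; rewrite -Ei nth_index.
Qed.

Lemma tile_succ T x y : @is_tile L M T -> x \in T -> y \in T ->
  (column (val x) < column (val y))%R -> exists2 w, w \in T & @stepN L M x w.
Proof.
case/is_tileE => _ [s [_ E srt]]; rewrite E !inE => xs ys Hc.
have := sorted_col x srt (etrans (index_mem x s) xs); rewrite nth_index // => Hx.
have := sorted_col x srt (etrans (index_mem y s) ys); rewrite nth_index // => Hy.
have Hlt : index x s < index y s by move: Hc; rewrite Hx Hy; lia.
have Hi : (index x s).+1 < size s.
  by apply: leq_ltn_trans Hlt _; rewrite index_mem.
exists (nth x s (index x s).+1); first by rewrite inE mem_nth.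
by have := sorted_step x srt Hi; rewrite nth_index.
Qed.

Lemma ex_start T : T != set0 -> exists x, @starts_at L M T x.
Proof.
case/set0Pn => x0 x0T.
case: (arg_minP (fun x : N => column (val x)) x0T) => x xT Hmin.
by exists x; apply/andP; split => //; apply/forall_inP => y yT; apply: Hmin.
Qed.

Lemma ex_end T : T != set0 -> exists x, @ends_at L M T x.
Proof.
case/set0Pn => x0 x0T.
case: (arg_maxP (fun x : N => column (val x)) x0T) => x xT Hmax.
by exists x; apply/andP; split => //; apply/forall_inP => y yT; apply: Hmax.
Qed.

Variable P : {set {set N}}.
Hypothesis HP : @is_dyck_tiling L M P.
Hypothesis HCE : @cover_expansive L M P.

Lemma HPpart : partition P [set: N].
Proof. by case/andP: HP. Qed.
Lemma HPtriv : trivIset P.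
Proof. by case/and3P: HPpart. Qed.
Lemma HPcov x : x \in cover P.
Proof. by case/and3P: HPpart => /eqP -> _ _; rewrite inE. Qed.
Lemma HP0 : set0 \notin P.
Proof. by case/and3P: HPpart. Qed.
Lemma HPdyck T : T \in P -> @is_dyck_tile L M T.
Proof. by case/andP: HP => _ /forall_inP; apply. Qed.
Lemma HPtile T : T \in P -> @is_tile L M T.
Proof. by move/HPdyck/andP => []. Qed.
Lemma HPne T : T \in P -> T != set0.
Proof. by move=> TP; apply: contraNneq HP0 => <-. Qed.
Lemma pbP x : pblock P x \in P.
Proof. exact/pblock_mem/HPcov. Qed.
Lemma pbx x : x \in pblock P x.
Proof. by rewrite mem_pblock HPcov. Qed.
Lemma pb_def T x : T \in P -> x \in T -> pblock P x = T.
Proof. by move=> TP xT; apply: def_pblock HPtriv TP xT. Qed.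

Lemma CE_SE x y sx sy : NW (val y) = val x ->
  @starts_at L M (pblock P x) sx -> @starts_at L M (pblock P y) sy ->
  (column (val sy) <= column (val sx))%R.
Proof.
move=> Hxy Hsx Hsy.
move/forallP: HCE => /(_ x) /forallP /(_ y) /forall_inP /(_ _ (pbP x))
  /forall_inP /(_ _ (pbP y)) /implyP.
rewrite !pbx => /(_ isT) /andP [/implyP H _].
by move: (H (introT eqP Hxy)) => /forallP /(_ sx) /forallP /(_ sy) /implyP;
  apply; rewrite Hsx Hsy.
Qed.

Lemma CE_SW x y ex ey : NE (val y) = val x ->
  @ends_at L M (pblock P x) ex -> @ends_at L M (pblock P y) ey ->
  (column (val ex) <= column (val ey))%R.
Proof.
move=> Hxy Hsx Hsy.
move/forallP: HCE => /(_ x) /forallP /(_ y) /forall_inP /(_ _ (pbP x))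
  /forall_inP /(_ _ (pbP y)) /implyP.
rewrite !pbx => /(_ isT) /andP [_ /implyP H].
by move: (H (introT eqP Hxy)) => /forallP /(_ ex) /forallP /(_ ey) /implyP;
  apply; rewrite Hsx Hsy.
Qed.

Lemma up_left n a : val a = NW (val n) ->
  (forall w : N, val w = SW (val n) -> w \notin pblock P n) -> a \in pblock P n.
Proof.
move=> Ha Hw.
have [sx Hsx] := ex_start (HPne (pbP a)).
have [sy Hsy] := ex_start (HPne (pbP n)).
have H1 := CE_SE (esym Ha) Hsx Hsy.
have H2 : (column (val sx) <= column (val a))%R.
  by case/andP: Hsx => _ /forall_inP; apply; rewrite pbx.
have H3 : (column (val sy) < column (val n))%R.
  by move: H1 H2; rewrite Ha colNW; lia.
have [|w wT] := tile_pred (HPtile (pbP n)) (pbx n) _ H3; first by case/andP: Hsy.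
case/orP => /eqP Hs.
  have : val w = SW (val n) by rewrite Hs /NE /SW /=; case: (val w).
  by move/Hw; rewrite wT.
by have -> : a = w by apply: val_inj; rewrite Ha Hs.
Qed.

Lemma up_right n b : val b = NE (val n) ->
  (forall w : N, val w = SE (val n) -> w \notin pblock P n) -> b \in pblock P n.
Proof.
move=> Hb Hw.
have [ex Hex] := ex_end (HPne (pbP b)).
have [ey Hey] := ex_end (HPne (pbP n)).
have H1 := CE_SW (esym Hb) Hex Hey.
have H2 : (column (val b) <= column (val ex))%R.
  by case/andP: Hex => _ /forall_inP; apply; rewrite pbx.
have H3 : (column (val n) < column (val ey))%R.
  by move: H1 H2; rewrite Hb colNE; lia.
have [|w wT] := tile_succ (HPtile (pbP n)) (pbx n) _ H3; first by case/andP: Hey.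
case/orP => /eqP Hs.
  by have -> : b = w by apply: val_inj; rewrite Hb Hs.
have : val w = SE (val n) by rewrite -Hs /NW /SE /=; case: (val w).
by move/Hw; rewrite wT.
Qed.


Lemma same_tile_col x y : y \in pblock P x -> column (val x) = column (val y) -> x = y.
Proof. by move=> yx; apply: tile_col_inj (HPtile (pbP x)) (pbx x) yx. Qed.

Lemma two_blocks w n n' : w \in pblock P n -> w \in pblock P n' -> n' \in pblock P n.
Proof.
move=> H1 H2.
have E1 := same_pblock HPtriv H1; have E2 := same_pblock HPtriv H2.
by rewrite -E1 E2 pbx.
Qed.


Lemma chain (m : node) k :
  (forall i, i < k -> [/\ nd m i \in skew_nodes L M, NW (nd m i) \in skew_nodes L M
        & NE (nd m i) \in skew_nodes L M]) ->
  SW m \notin skew_nodes L M -> SE m \notin skew_nodes L M ->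
  forall i, i < k -> forall n a b : N, val n = nd m i -> val a = NW (val n) ->
  val b = NE (val n) -> a \in pblock P n /\ b \in pblock P n.
Proof.
move=> Hmem HSW HSE; elim => [|i IH] Hi n a b Hn Ha Hb.
  split; [apply: up_left | apply: up_right] => // w Hw; exfalso.
    by move: (valP w); rewrite Hw Hn /nd !addn0 (negbTE HSW).
  by move: (valP w); rewrite Hw Hn /nd !addn0 (negbTE HSE).
have Hi' : i < k by apply: ltnW.
case: (Hmem i Hi') => m1 m2 m3.
have := IH Hi' (SeqSub m1) (SeqSub m2) (SeqSub m3) erefl erefl erefl.
case=> /= Ha' Hb'.
have Hne : SeqSub m1 != n.
  by apply/eqP => /(f_equal val); rewrite Hn /= => /esym /nd_neqS.
have Hcol : column (val n) = column (val (SeqSub m1)).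
  by rewrite Hn /= !col_nd.
split; [apply: up_left | apply: up_right] => // w Hw; apply/negP => wn.
  have Ew : w = SeqSub m2.
    by apply: val_inj; rewrite Hw Hn SW_nd.
  rewrite Ew in wn.
  by move/eqP: Hne; apply; apply/esym/same_tile_col => //; apply: two_blocks Ha'.
have Ew : w = SeqSub m3.
  by apply: val_inj; rewrite Hw Hn SE_nd.
rewrite Ew in wn.
by move/eqP: Hne; apply; apply/esym/same_tile_col => //; apply: two_blocks Hb'.
Qed.

End Generic.

Lemma mem_diag_nodes L n : (n \in diag_nodes L) = in_diagram L n.
Proof.
case: n => a b; rewrite /in_diagram /=.
apply/allpairsPdep/idP => [[a' [b' [ha hb [-> ->]]]] | /and3P [ha hb hab]].
  move: ha hb; rewrite !mem_iota /=; lia.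
exists a, b; split => //; rewrite mem_iota.
  case: (ltnP (size L) a) => H; last by lia.
  by move: hab; rewrite nth_default //; lia.
by lia.
Qed.

Lemma mem_skew L M n : (n \in skew_nodes L M) = in_diagram L n && ~~ in_diagram M n.
Proof. by rewrite mem_filter mem_diag_nodes andbC. Qed.

Lemma diag_down L (x y : node) : is_partition L -> in_diagram L x ->
  0 < y.1 <= x.1 -> 0 < y.2 <= x.2 -> in_diagram L y.
Proof.
case/andP => srt _; case: x => a b; case: y => c d /=.
rewrite /in_diagram /= => /and3P [ha hb hab] hc hd.
apply/and3P; split; try lia.
have Hs : a.-1 < size L.
  case: (ltnP a.-1 (size L)) => // H; move: hab; rewrite nth_default //; lia.
have tr : transitive geq by move=> u v w /= h1 h2; apply: leq_trans h2 h1.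
have H := sorted_leq_nth tr (fun x => leqnn x) 0 srt.
have : nth 0 L a.-1 <= nth 0 L c.-1.
  by apply: (H c.-1 a.-1); rewrite ?inE; lia.
lia.
Qed.

Lemma addable_below M m (y : node) : addable M m -> 0 < y.1 <= m.1 -> 0 < y.2 <= m.2 ->
  y != m -> in_diagram M y.
Proof.
case=> _ [M' [HM' HE]] h1 h2 hne.
have := @diag_down M' m y HM'; rewrite HE eqxx orbT => /(_ isT h1 h2).
by rewrite HE (negbTE hne) orbF.
Qed.

Lemma addable_valid M m : addable M m -> 0 < m.1 /\ 0 < m.2.
Proof.
case=> _ [M' [HM' HE]]; have := HE m; rewrite eqxx orbT.
by case/and3P.
Qed.


Section CEP.
Variables L M : seq nat.
Notation N := (seq_sub (skew_nodes L M)).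

Definition CEP (P : {set {set N}}) :=
  (forall (x y sx sy : N) (Tx Ty : {set N}), Tx \in P -> Ty \in P -> x \in Tx -> y \in Ty ->
     NW (val y) = val x -> @starts_at L M Tx sx -> @starts_at L M Ty sy ->
     (column (val sy) <= column (val sx))%R) /\
  (forall (x y ex ey : N) (Tx Ty : {set N}), Tx \in P -> Ty \in P -> x \in Tx -> y \in Ty ->
     NE (val y) = val x -> @ends_at L M Tx ex -> @ends_at L M Ty ey ->
     (column (val ex) <= column (val ey))%R).

Lemma CEP_iff P : @cover_expansive L M P <-> CEP P.
Proof.
split.
  move=> H; split.
    move=> x y sx sy Tx Ty TxP TyP xT yT E Hsx Hsy.
    move/forallP: H => /(_ x) /forallP /(_ y) /forall_inP /(_ _ TxP)
      /forall_inP /(_ _ TyP) /implyP; rewrite xT yT => /(_ isT) /andP [/implyP H _].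
    by move: (H (introT eqP E)) => /forallP /(_ sx) /forallP /(_ sy) /implyP;
      apply; rewrite Hsx Hsy.
  move=> x y sx sy Tx Ty TxP TyP xT yT E Hsx Hsy.
  move/forallP: H => /(_ x) /forallP /(_ y) /forall_inP /(_ _ TxP)
    /forall_inP /(_ _ TyP) /implyP; rewrite xT yT => /(_ isT) /andP [_ /implyP H].
  by move: (H (introT eqP E)) => /forallP /(_ sx) /forallP /(_ sy) /implyP;
    apply; rewrite Hsx Hsy.
case=> H1 H2.
apply/forallP => x; apply/forallP => y; apply/forall_inP => Tx TxP.
apply/forall_inP => Ty TyP; apply/implyP => /andP [xT yT].
apply/andP; split; apply/implyP => /eqP E; apply/forallP => s1; apply/forallP => s2;
  apply/implyP => /andP [h1 h2].
  exact: H1 TxP TyP xT yT E h1 h2.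
exact: H2 TxP TyP xT yT E h1 h2.
Qed.
End CEP.

Lemma dyck1 L M (x : seq_sub (skew_nodes L M)) : is_dyck_tile [set x].
Proof.
have Ht : is_tile [set x].
  apply/is_tileE; split; first by apply/set0Pn; exists x; rewrite inE.
  exists [:: x]; split; first by rewrite cards1.
    by apply/setP => y; rewrite !inE.
  by [].
apply/andP; split; first exact: Ht.
apply/existsP; exists x; apply/existsP; exists x.
have Hs : starts_at [set x] x.
  apply/andP; split; first by rewrite inE.
  by apply/forall_inP => z; rewrite inE => /eqP ->.
have He : ends_at [set x] x.
  apply/andP; split; first by rewrite inE.
  by apply/forall_inP => z; rewrite inE => /eqP ->.
rewrite Hs He; apply/forall_inP => z; rewrite inE => /eqP ->.
by rewrite leqnn.
Qed.

Section Main.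
Variables (lam mu lamp : seq nat) (l m : node).
Hypotheses (Hlam : is_partition lam) (Hmu : is_partition mu)
  (Hlamp : is_partition lamp) (Hl : ~~ in_diagram lam l)
  (Hlp : forall n : node, in_diagram lamp n = in_diagram lam n || (n == l))
  (Hm : addable mu m) (Hcol : column m = column l)
  (Hcont : forall n, in_diagram mu n -> in_diagram lam n).

Lemma l_valid : 0 < l.1 /\ 0 < l.2.
Proof. by have := Hlp l; rewrite eqxx orbT => /and3P [h1 h2 _]; split. Qed.

Lemma lam_below (y : node) : 0 < y.1 <= l.1 -> 0 < y.2 <= l.2 -> y != l ->
  in_diagram lam y.
Proof.
move=> h1 h2 hne.
have := @diag_down lamp l y Hlamp; rewrite Hlp eqxx orbT => /(_ isT h1 h2).
by rewrite Hlp (negbTE hne) orbF.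
Qed.

Lemma NWl_out : ~~ in_diagram lamp (NW l).
Proof.
rewrite Hlp negb_or; apply/andP; split; last first.
  by case: (l) => a b; rewrite /NW; apply/eqP; case; lia.
apply/negP => H; move/negP: Hl; apply.
by apply: (diag_down Hlam H); case: l_valid => *; rewrite /NW /=; lia.
Qed.

Lemma NEl_out : ~~ in_diagram lamp (NE l).
Proof.
rewrite Hlp negb_or; apply/andP; split; last first.
  by case: (l) => a b; rewrite /NE; apply/eqP; case; lia.
apply/negP => H; move/negP: Hl; apply.
by apply: (diag_down Hlam H); case: l_valid => *; rewrite /NE /=; lia.
Qed.

Lemma m_valid : 0 < m.1 /\ 0 < m.2.
Proof. exact: addable_valid Hm. Qed.

Lemma m_out : ~~ in_diagram mu m.
Proof. by case: Hm. Qed.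

Lemma colE (x y : node) : column x = column y -> (x.2 + y.1 = y.2 + x.1)%N.
Proof. by case: x => a b; case: y => c d; rewrite /column /=; lia. Qed.

Lemma m_le : m.1 <= l.1.
Proof.
have := colE Hcol; case: m_valid => hm1 hm2; case: l_valid => hl1 hl2 Hc.
case: (leqP m.1 l.1) => // Hlt; exfalso.
have HSE : in_diagram mu (SE m).
  apply: (addable_below Hm); rewrite /SE /=; try lia.
  by case: (m) Hlt => a b /= ?; apply/eqP; case; lia.
move/negP: Hl; apply; apply: (diag_down Hlam (Hcont HSE)); rewrite /SE /=; lia.
Qed.

Definition k := l.1 - m.1.

Lemma l_nd : l = nd m k.
Proof.
have := colE Hcol; have := m_le; rewrite /k /nd.
case: (l) => a b; case: (m) => c d /= *; congr pair; lia.
Qed.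

Lemma not_mu (y : node) : m.1 <= y.1 -> m.2 <= y.2 -> ~~ in_diagram mu y.
Proof.
move=> h1 h2; apply/negP => H; move/negP: m_out; apply.
by apply: (diag_down Hmu H); case: m_valid => *; lia.
Qed.

Lemma chain_mem i : i < k -> [/\ nd m i \in skew_nodes lam mu,
  NW (nd m i) \in skew_nodes lam mu & NE (nd m i) \in skew_nodes lam mu].
Proof.
move=> Hi; have El := l_nd; case: m_valid => hm1 hm2.
have E1 : l.1 = m.1 + k by rewrite {1}El.
have E2 : l.2 = m.2 + k by rewrite {1}El.
rewrite !mem_skew /nd /NW /NE /=; split; apply/andP; split;
  try (apply: not_mu; rewrite /=; lia);
  apply: lam_below; rewrite /= ?E1 ?E2; try lia;
  by rewrite El /nd; apply/eqP; case; lia.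
Qed.

Lemma SWm_out L : SW m \notin skew_nodes L mu.
Proof.
rewrite mem_skew negb_and negbK; case: m_valid => hm1 hm2.
case Hm2 : (m.2 == 1).
  by rewrite /SW (eqP Hm2) /in_diagram /= andbF.
apply/orP; right; apply: (addable_below Hm); rewrite /SW /=; try lia.
by case: (m) hm2 Hm2 => a b /= *; apply/eqP; case; lia.
Qed.

Lemma SEm_out L : SE m \notin skew_nodes L mu.
Proof.
rewrite mem_skew negb_and negbK; case: m_valid => hm1 hm2.
case Hm1 : (m.1 == 1).
  by rewrite /SE (eqP Hm1) /in_diagram.
apply/orP; right; apply: (addable_below Hm); rewrite /SE /=; try lia.
by case: (m) hm1 Hm1 => a b /= *; apply/eqP; case; lia.
Qed.

Lemma l_out_mu : ~~ in_diagram mu l.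
Proof. by apply: contra Hl; apply: Hcont. Qed.

Lemma skewp y : (y \in skew_nodes lamp mu) = (y \in skew_nodes lam mu) || (y == l).
Proof.
rewrite !mem_skew Hlp; case: eqP => [->|_]; last by rewrite !orbF.
by rewrite l_out_mu (negbTE Hl) orbT.
Qed.


Notation Nl := (seq_sub (skew_nodes lam mu)).
Notation Np := (seq_sub (skew_nodes lamp mu)).

Lemma chain_memp i : i < k -> [/\ nd m i \in skew_nodes lamp mu,
  NW (nd m i) \in skew_nodes lamp mu & NE (nd m i) \in skew_nodes lamp mu].
Proof. by case/chain_mem => h1 h2 h3; rewrite !skewp h1 h2 h3. Qed.

Lemma nd_inj i j : nd m i = nd m j -> i = j.
Proof. by rewrite /nd; case; lia. Qed.

Lemma SWl_k0 : k = 0 -> SW l = SW m.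
Proof. by move=> k0; rewrite l_nd k0 /nd !addn0; case: (m). Qed.
Lemma SEl_k0 : k = 0 -> SE l = SE m.
Proof. by move=> k0; rewrite l_nd k0 /nd !addn0; case: (m). Qed.

Lemma SWl_k k' : k = k'.+1 -> SW l = NW (nd m k').
Proof. by move=> kk; rewrite l_nd kk /nd /SW /NW /=; congr pair; lia. Qed.
Lemma SEl_k k' : k = k'.+1 -> SE l = NE (nd m k').
Proof. by move=> kk; rewrite l_nd kk /nd /SE /NE /=; congr pair; lia. Qed.

Lemma single_l (P' : {set {set Np}}) (HP : is_dyck_tiling P')
  (HCE : cover_expansive P') (lP : Np) (HlP : val lP = l) :
  pblock P' lP = [set lP].
Proof.
have Hexcl : forall w : Np, w \in pblock P' lP -> val w = SW l \/ val w = SE l -> False.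
  move=> w win Hw; case Ek: k => [|k'].
    move: (valP w); case: Hw => ->; [rewrite SWl_k0 // | rewrite SEl_k0 //].
      by rewrite (negbTE (SWm_out _)).
    by rewrite (negbTE (SEm_out _)).
  have Hk' : k' < k by rewrite Ek.
  case: (chain_memp Hk') => h1 h2 h3.
  have [Ha Hb] := chain HP HCE chain_memp (SWm_out _) (SEm_out _) Hk'
     (n := SeqSub h1) (a := SeqSub h2) (b := SeqSub h3) erefl erefl erefl.
  have Hn : SeqSub h1 = lP.
    apply: (same_tile_col HP); last by rewrite HlP l_nd /= !col_nd.
    case: Hw => Hw.
      have Ew : w = SeqSub h2 by apply: val_inj; rewrite Hw /= (SWl_k Ek).
      by apply: (two_blocks HP _ win); rewrite -Ew in Ha.
    have Ew : w = SeqSub h3 by apply: val_inj; rewrite Hw /= (SEl_k Ek).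
    by apply: (two_blocks HP _ win); rewrite -Ew in Hb.
  by move: (f_equal val Hn); rewrite HlP l_nd /= Ek => /esym /nd_neqS.
apply/setP => y; rewrite inE; apply/idP/eqP => [yin|->]; last exact: pbx HP lP.
case: (ltgtP (column (val y)) (column (val lP))) => Hc.
- have [w win] := tile_pred (HPtile HP (pbP HP lP)) (pbx HP lP) yin Hc.
  case/orP => /eqP Hs.
    exfalso; apply: (Hexcl w win); left.
    by rewrite /SW -HlP Hs /NE /=; case: (val w).
  exfalso; move: (valP w); rewrite -Hs HlP mem_skew.
  by rewrite (negbTE NWl_out).
- have [w win] := tile_succ (HPtile HP (pbP HP lP)) (pbx HP lP) yin Hc.
  case/orP => /eqP Hs.
    exfalso; move: (valP w); rewrite Hs HlP mem_skew.
    by rewrite (negbTE NEl_out).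
  exfalso; apply: (Hexcl w win); right.
  by rewrite /SE -HlP -Hs /NW /=; case: (val w).
- by apply/esym/(same_tile_col HP yin).
Qed.


Lemma emb_proof (x : Nl) : val x \in skew_nodes lamp mu.
Proof. by rewrite skewp (valP x). Qed.
Definition emb (x : Nl) : Np := SeqSub (emb_proof x).
Lemma emb_val x : val (emb x) = val x. Proof. by []. Qed.
Lemma emb_inj : injective emb.
Proof. by move=> x y /(f_equal val) /= /val_inj. Qed.

Lemma lP_proof : l \in skew_nodes lamp mu.
Proof. by rewrite skewp eqxx orbT. Qed.
Definition lP : Np := SeqSub lP_proof.

Lemma emb_neq x : emb x != lP.
Proof.
apply/eqP => /(f_equal val) /= E.
have : ssval x \in skew_nodes lam mu := ssvalP x.
by rewrite E mem_skew (negbTE Hl).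
Qed.

Lemma lP_notin (T : {set Nl}) : lP \notin emb @: T.
Proof. by apply/imsetP => [[x _ /eqP]]; rewrite eq_sym (negbTE (emb_neq x)). Qed.

Lemma surj (y : Np) : y = lP \/ exists x, y = emb x.
Proof.
move: (valP y); rewrite skewp => /orP [H|/eqP H].
  by right; exists (SeqSub H); apply: val_inj.
by left; apply: val_inj.
Qed.

Lemma pullback (s' : seq Np) : (forall y, y \in s' -> exists x, emb x = y) ->
  exists s, map emb s = s'.
Proof.
elim: s' => [|y s' IH] H; first by exists [::].
have [x Hx] := H y (mem_head _ _).
have [|s Hs] := IH; first by move=> z zs; apply: H; rewrite inE zs orbT.
by exists (x :: s); rewrite /= Hx Hs.
Qed.

Lemma set_map_emb (s : seq Nl) : [set x in map emb s] = emb @: [set x in s].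
Proof.
apply/setP => y; rewrite inE; apply/mapP/imsetP => [[x xs ->]|[x xin ->]].
  by exists x; rewrite ?inE.
by exists x; rewrite ?inE in xin.
Qed.

Lemma tile_emb (T : {set Nl}) : is_tile (emb @: T) = is_tile T.
Proof.
apply/idP/idP => /is_tileE [nz [s [Hs E srt]]]; apply/is_tileE.
  split; first by apply: contraNneq nz => ->; rewrite imset0.
  have [|s0 Hs0] := pullback (s' := s).
    move=> y ys; have : y \in emb @: T by rewrite E inE.
    by case/imsetP => x _ ->; exists x.
  exists s0; split.
  - by rewrite -(card_imset _ emb_inj) -Hs -Hs0 size_map.
  - apply/setP => x; rewrite inE -(mem_imset _ _ emb_inj) E inE -Hs0.
    by rewrite (mem_map emb_inj).
  - by move: srt; rewrite -Hs0 sorted_map.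
split; first by apply: contraNneq nz => /eqP; rewrite imset_eq0.
exists (map emb s); split.
- by rewrite size_map Hs card_imset //; apply: emb_inj.
- by rewrite set_map_emb E.
- by rewrite sorted_map.
Qed.

Lemma starts_emb (T : {set Nl}) x : starts_at (emb @: T) (emb x) = starts_at T x.
Proof.
rewrite /starts_at (mem_imset _ _ emb_inj); congr andb.
apply/forall_inP/forall_inP => H y yT; first by apply: (H (emb y)); apply: imset_f.
by case/imsetP: yT => z zT ->; apply: H.
Qed.

Lemma ends_emb (T : {set Nl}) x : ends_at (emb @: T) (emb x) = ends_at T x.
Proof.
rewrite /ends_at (mem_imset _ _ emb_inj); congr andb.
apply/forall_inP/forall_inP => H y yT; first by apply: (H (emb y)); apply: imset_f.
by case/imsetP: yT => z zT ->; apply: H.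
Qed.

Lemma dyck_emb (T : {set Nl}) : is_dyck_tile (emb @: T) = is_dyck_tile T.
Proof.
rewrite /is_dyck_tile tile_emb; congr andb.
apply/existsP/existsP => [[x' /existsP [y' /and3P [Hx Hy Hz]]]|[x /existsP [y /and3P [Hx Hy Hz]]]].
  case/andP: (Hx) => /imsetP [x _ Ex] _; case/andP: (Hy) => /imsetP [y _ Ey] _.
  subst x' y'; exists x; apply/existsP; exists y.
  rewrite -starts_emb -ends_emb Hx Hy /=; apply/forall_inP => z zT.
  by move/forall_inP: Hz => /(_ (emb z) (imset_f _ zT)).
exists (emb x); apply/existsP; exists (emb y).
rewrite starts_emb ends_emb Hx Hy /=; apply/forall_inP => z' /imsetP [z zT ->].
by move/forall_inP: Hz => /(_ z zT).
Qed.



Definition F (Q : {set {set Nl}}) : {set {set Np}} :=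
  [set lP] |: [set emb @: (T : {set Nl}) | T in Q].

Lemma mem_F Q (T : {set Np}) :
  T \in F Q -> T = [set lP] \/ exists2 T0, T0 \in Q & T = emb @: T0.
Proof.
rewrite in_setU1 => /orP [/eqP ->|/imsetP [T0 T0Q ->]]; first by left.
by right; exists T0.
Qed.

Lemma emb_F Q (T : {set Nl}) : (emb @: T \in F Q) = (T \in Q).
Proof.
rewrite in_setU1 (mem_imset _ _ (imset_inj emb_inj)).
case: eqP => //= E; have := lP_notin T; rewrite E inE eqxx //.
Qed.

Lemma F_inj : injective F.
Proof.
move=> Q1 Q2 E; apply/setP => T.
by rewrite -!(emb_F _ T) E.
Qed.


Lemma part_F Q : partition (F Q) [set: Np] = partition Q [set: Nl].
Proof.
rewrite -(imset_partition Q [set: Nl] emb_inj).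
set fQ := [set emb @: (B : {set Nl}) | B in Q].
have notin : [set lP] \notin fQ.
  by apply/imsetP => [[B _ E]]; have := lP_notin B; rewrite -E inE eqxx.
have covF : cover (F Q) = lP |: cover fQ by rewrite /F /cover big_setU1.
have ncov : lP \notin cover fQ.
  by apply/bigcupP => [[B /imsetP [B0 _ ->]]]; apply/negP; apply: lP_notin.
have setTE : [set: Np] = lP |: emb @: [set: Nl].
  apply/setP => y; rewrite !inE; case: (surj y) => [->|[x ->]]; first by rewrite eqxx.
  by rewrite imset_f ?orbT.
have nD : lP \notin emb @: [set: Nl] by apply: lP_notin.
have eqU : (lP |: cover fQ == lP |: emb @: [set: Nl]) = (cover fQ == emb @: [set: Nl]).
  apply/eqP/eqP => [E|->] //; apply/setP => y; move/setP: E => /(_ y); rewrite !inE.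
  case: eqP => [->|//]; by rewrite (negbTE ncov) (negbTE nD).
rewrite /partition covF setTE eqU.
have s0 : (set0 \in F Q) = (set0 \in fQ).
  rewrite /F in_setU1; case: eqP => //= E; exfalso.
  by move/setP: E => /(_ lP); rewrite !inE eqxx.
rewrite -/(F Q) s0; case Hs0 : (set0 \in fQ); first by rewrite !andbF.
congr andb; congr andb; apply/idP/idP => H.
  by apply: trivIsetS H; apply: subsetUr.
rewrite /F; case: (@trivIsetU1 _ [set lP] fQ _ H (negbT Hs0)) => // B /imsetP [B0 _ ->].
by rewrite disjoints1 lP_notin.
Qed.

Lemma tiles_F Q : [forall T in F Q, is_dyck_tile T] = [forall T in Q, is_dyck_tile T].
Proof.
apply/forall_inP/forall_inP => H T TQ.
  by rewrite -dyck_emb; apply: H; rewrite emb_F.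
case: (mem_F TQ) => [->|[T0 T0Q ->]]; first exact: dyck1.
by rewrite dyck_emb; apply: H.
Qed.

Lemma tiling_F Q : is_dyck_tiling (F Q) = is_dyck_tiling Q.
Proof. by rewrite /is_dyck_tiling part_F tiles_F. Qed.


Lemma NW_SE (y n : node) : NW y = n -> y = SE n.
Proof. by case: y => a b <-. Qed.
Lemma NE_SW (y n : node) : NE y = n -> y = SW n.
Proof. by case: y => a b <-. Qed.
Lemma NW_neq (n : node) : NW n <> n.
Proof. by case: n => a b; rewrite /NW; case; lia. Qed.
Lemma NE_neq (n : node) : NE n <> n.
Proof. by case: n => a b; rewrite /NE; case; lia. Qed.

Lemma Nl_not_NWl (x : Nl) : val x <> NW l.
Proof.
move=> E; have : ssval x \in skew_nodes lam mu := ssvalP x.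
rewrite E mem_skew => /andP [H _]; move/negP: NWl_out; apply.
by rewrite Hlp H.
Qed.
Lemma Nl_not_NEl (x : Nl) : val x <> NE l.
Proof.
move=> E; have : ssval x \in skew_nodes lam mu := ssvalP x.
rewrite E mem_skew => /andP [H _]; move/negP: NEl_out; apply.
by rewrite Hlp H.
Qed.

Lemma F_lP Q (T : {set Np}) : T \in F Q -> lP \in T -> T = [set lP].
Proof.
case/mem_F => [//|[T0 _ E]]; rewrite E => H.
by move: (lP_notin T0); rewrite H.
Qed.

Lemma F_emb Q (T : {set Np}) x : T \in F Q -> emb x \in T ->
  exists2 T0, T0 \in Q & T = emb @: T0 /\ x \in T0.
Proof.
case/mem_F => [->|[T0 T0Q ->]].
  by rewrite inE => /eqP E; move: (emb_neq x); rewrite E eqxx.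
by rewrite (mem_imset _ _ emb_inj) => xT; exists T0.
Qed.

Lemma starts_pull (T0 : {set Nl}) s : starts_at (emb @: T0) s ->
  exists2 s0, s = emb s0 & starts_at T0 s0.
Proof.
move=> H; case/andP: (H) => /imsetP [s0 _ E] _; exists s0 => //.
by rewrite -starts_emb -E.
Qed.
Lemma ends_pull (T0 : {set Nl}) s : ends_at (emb @: T0) s ->
  exists2 s0, s = emb s0 & ends_at T0 s0.
Proof.
move=> H; case/andP: (H) => /imsetP [s0 _ E] _; exists s0 => //.
by rewrite -ends_emb -E.
Qed.

Lemma CE_F Q : is_dyck_tiling Q -> cover_expansive (F Q) = cover_expansive Q.
Proof.
move=> HQ; apply/idP/idP => /CEP_iff [H1 H2]; apply/CEP_iff; split.
- move=> x y sx sy Tx Ty TxQ TyQ xT yT E Hsx Hsy.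
  apply: (H1 (emb x) (emb y) (emb sx) (emb sy) (emb @: Tx) (emb @: Ty));
    rewrite ?emb_F ?starts_emb ?(mem_imset _ _ emb_inj) //.
- move=> x y sx sy Tx Ty TxQ TyQ xT yT E Hsx Hsy.
  apply: (H2 (emb x) (emb y) (emb sx) (emb sy) (emb @: Tx) (emb @: Ty));
    rewrite ?emb_F ?ends_emb ?(mem_imset _ _ emb_inj) //.
- have HCE : cover_expansive Q by apply/CEP_iff.
  move=> x y sx sy Tx Ty TxF TyF xT yT E Hsx Hsy.
  case: (surj x) => [Ex|[x0 Ex]]; case: (surj y) => [Ey|[y0 Ey]]; subst x y.
  + by exfalso; apply: (@NW_neq l).
  + have Tx1 := F_lP TxF xT.
    have -> : sx = lP by case/andP: Hsx; rewrite Tx1 inE => /eqP.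
    have [Ty0 Ty0Q [ETy y0T]] := F_emb TyF yT.
    rewrite ETy in Hsy; have [sy0 -> Hsy0] := starts_pull Hsy.
    have Hy0 : val y0 = SE l by apply: NW_SE.
    case Ek: k => [|k'].
      exfalso; have : ssval y0 \in skew_nodes lam mu := ssvalP y0.
      by rewrite /= Hy0 SEl_k0 // (negbTE (SEm_out _)).
    have Hk' : k' < k by rewrite Ek.
    case: (chain_mem Hk') => h1 h2 h3.
    have [_ Hb] := chain HQ HCE chain_mem (SWm_out _) (SEm_out _) Hk'
      (n := SeqSub h1) (a := SeqSub h2) (b := SeqSub h3) erefl erefl erefl.
    have Ey0 : y0 = SeqSub h3 by apply: val_inj; rewrite Hy0 /= (SEl_k Ek).
    have nT : SeqSub h1 \in Ty0.
      rewrite -(pb_def HQ Ty0Q y0T) Ey0 (same_pblock (HPtriv HQ) Hb).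
      exact: pbx HQ _.
    case/andP: Hsy0 => _ /forall_inP /(_ _ nT).
    by rewrite /= col_nd Hcol.
  + by exfalso; apply: (Nl_not_NWl (x := x0)); exact: (esym E).
  + have [Tx0 Tx0Q [ETx x0T]] := F_emb TxF xT.
    have [Ty0 Ty0Q [ETy y0T]] := F_emb TyF yT.
    rewrite ETx in Hsx; rewrite ETy in Hsy.
    have [sx0 -> Hsx0] := starts_pull Hsx.
    have [sy0 -> Hsy0] := starts_pull Hsy.
    by move/CEP_iff: HCE => [C1 _]; apply: (C1 x0 y0 sx0 sy0 Tx0 Ty0).
- have HCE : cover_expansive Q by apply/CEP_iff.
  move=> x y sx sy Tx Ty TxF TyF xT yT E Hsx Hsy.
  case: (surj x) => [Ex|[x0 Ex]]; case: (surj y) => [Ey|[y0 Ey]]; subst x y.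
  + by exfalso; apply: (@NE_neq l).
  + have Tx1 := F_lP TxF xT.
    have -> : sx = lP by case/andP: Hsx; rewrite Tx1 inE => /eqP.
    have [Ty0 Ty0Q [ETy y0T]] := F_emb TyF yT.
    rewrite ETy in Hsy; have [sy0 -> Hsy0] := ends_pull Hsy.
    have Hy0 : val y0 = SW l by apply: NE_SW.
    case Ek: k => [|k'].
      exfalso; have : ssval y0 \in skew_nodes lam mu := ssvalP y0.
      by rewrite /= Hy0 SWl_k0 // (negbTE (SWm_out _)).
    have Hk' : k' < k by rewrite Ek.
    case: (chain_mem Hk') => h1 h2 h3.
    have [Ha _] := chain HQ HCE chain_mem (SWm_out _) (SEm_out _) Hk'
      (n := SeqSub h1) (a := SeqSub h2) (b := SeqSub h3) erefl erefl erefl.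
    have Ey0 : y0 = SeqSub h2 by apply: val_inj; rewrite Hy0 /= (SWl_k Ek).
    have nT : SeqSub h1 \in Ty0.
      rewrite -(pb_def HQ Ty0Q y0T) Ey0 (same_pblock (HPtriv HQ) Ha).
      exact: pbx HQ _.
    case/andP: Hsy0 => _ /forall_inP /(_ _ nT).
    by rewrite /= col_nd Hcol.
  + by exfalso; apply: (Nl_not_NEl (x := x0)); exact: (esym E).
  + have [Tx0 Tx0Q [ETx x0T]] := F_emb TxF xT.
    have [Ty0 Ty0Q [ETy y0T]] := F_emb TyF yT.
    rewrite ETx in Hsx; rewrite ETy in Hsy.
    have [sx0 -> Hsx0] := ends_pull Hsx.
    have [sy0 -> Hsy0] := ends_pull Hsy.
    by move/CEP_iff: HCE => [_ C2]; apply: (C2 x0 y0 sx0 sy0 Tx0 Ty0).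
Qed.


Lemma A_F Q : (is_dyck_tiling (F Q) && cover_expansive (F Q)) =
  (is_dyck_tiling Q && cover_expansive Q).
Proof. by rewrite tiling_F; case HQ : (is_dyck_tiling Q) => //=; apply: CE_F. Qed.

Definition G (P' : {set {set Np}}) : {set {set Nl}} :=
  [set emb @^-1: (T : {set Np}) | T in [set T in P' | T != [set lP]]].

Lemma FG P' : is_dyck_tiling P' -> cover_expansive P' -> F (G P') = P'.
Proof.
move=> HP HCE.
have Hl1 : [set lP] \in P'.
  by rewrite -(single_l HP HCE (lP := lP)) //; apply: pbP.
have key : forall T, T \in P' -> T != [set lP] -> emb @: (emb @^-1: T) = T.
  move=> T TP Tn; have nT : lP \notin T.
    by apply: contra Tn => lT; rewrite -(pb_def HP TP lT) (single_l HP HCE (lP := lP)).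
  apply/setP => y; apply/imsetP/idP => [[x]|yT]; first by rewrite inE => ? ->.
  case: (surj y) => [Ey|[x Ey]]; first by move: yT; rewrite Ey (negbTE nT).
  by exists x; rewrite ?inE -?Ey.
apply/setP => T; apply/idP/idP.
  case/mem_F => [->//|[T0 /imsetP [T1 T1in ->] ->]].
  by move: T1in; rewrite inE => /andP [T1P T1n]; rewrite key.
move=> TP; rewrite /F in_setU1; case: eqP => //= /eqP Tn.
apply/imsetP; exists (emb @^-1: T); last by rewrite key.
by apply: imset_f; rewrite inE TP.
Qed.

Lemma card_main :
  #|[set P' : {set {set Np}} | is_dyck_tiling P' && cover_expansive P']| =
  #|[set Q : {set {set Nl}} | is_dyck_tiling Q && cover_expansive Q]|.
Proof.
rewrite -(card_imset _ F_inj); apply: eq_card => P'; rewrite [in LHS]inE.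
apply/idP/imsetP => [/andP [HP HCE]|[Q]].
  exists (G P'); last by rewrite FG.
  by rewrite inE -A_F FG // HP HCE.
by rewrite inE -A_F => H ->.
Qed.

End Main.

Lemma containsP L M : reflect (forall n, in_diagram M n -> in_diagram L n) (contains L M).
Proof.
apply: (iffP allP) => H n.
  by rewrite -mem_diag_nodes => /H.
by rewrite mem_diag_nodes => /H.
Qed.

Lemma colE' (x y : node) : column x = column y -> (x.2 + y.1 = y.2 + x.1)%N.
Proof. by case: x => a b; case: y => c d; rewrite /column /=; lia. Qed.

Lemma no_contain (lam mu lamp : seq nat) (l m : node) :
  is_partition lam -> is_partition mu -> ~~ in_diagram lam l ->
  (forall n : node, in_diagram lamp n = in_diagram lam n || (n == l)) ->
  addable mu m -> column m = column l ->
  contains lamp mu -> contains lam mu.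
Proof.
move=> Hlam Hmu Hl Hlp Hm Hcol /containsP Hc; apply/containsP => n Hn.
have := Hc n Hn; rewrite Hlp => /orP [//|/eqP En]; subst n; exfalso.
have [hm1 hm2] := addable_valid Hm.
have Hlv : 0 < l.1 /\ 0 < l.2 by case/and3P: Hn.
case: Hlv => hl1 hl2.
have Hce := colE' Hcol.
case: (leqP m.1 l.1) => Hle.
  case: Hm => /negP H _; apply: H; apply: (diag_down Hmu Hn); simpl; lia.
have HSE : in_diagram mu (SE m).
  apply: (addable_below Hm); rewrite /SE /=; try lia.
  by case: (m) Hle => a b /= ?; apply/eqP; case; lia.
have := Hc _ HSE; rewrite Hlp => /orP [H|/eqP E].
  by move/negP: Hl; apply; apply: (diag_down Hlam H); rewrite /SE /=; lia.
by move: Hce Hle; rewrite -E /SE /=; lia.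
Qed.

Theorem proposition4p8 (j : int) (lam mu lamp : seq nat) (l : node) :
  is_partition lam -> is_partition mu ->
  addable lam l -> column l = j ->
  (exists m : node, addable mu m /\ column m = j) ->
  is_partition lamp ->
  (forall n : node, in_diagram lamp n = in_diagram lam n || (n == l)) ->
  e_coef lamp mu = e_coef lam mu.
Proof.
move=> Hlam Hmu [Hl _] Hcl [m [Hm Hcm]] Hlamp Hlp.
have Hcol : column m = column l by rewrite Hcm Hcl.
rewrite /e_coef; case Hc : (contains lam mu).
  have Hcont := elimT (containsP lam mu) Hc.
  have -> : contains lamp mu.
    by apply/containsP => n /Hcont H; rewrite Hlp H.
  exact: (card_main Hlam Hmu Hlamp Hl Hlp Hm Hcol Hcont).
case Hcp : (contains lamp mu) => //.
by move: Hc; rewrite (no_contain Hlam Hmu Hl Hlp Hm Hcol Hcp).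
Qed.
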